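(* Let $G$ and $H$ be connected graphs, each with at least $3$ vertices, let $\ell_1=\lambda_3(G)$, $\ell_2=\lambda_3(H)$, $n_2=|V(H)|$. Let $S=\{x,y,z\}$ be a set of three distinct vertices of $G\circ H$ such that exactly two of them lie in a common $H$-layer (i.e., $x,y\in H(u)$ and $z\in H(u')$ for some distinct $u,u'\in V(G)$). Then $G\circ H$ contains at least $\ell_2+\ell_1 n_2$ pairwise edge-disjoint $S$-trees.
   Context: For a graph $G$ and $S\subseteq V(G)$ with $|S|\ge 2$, an $S$-tree is a subgraph that is a tree containing all vertices of $S$; $\lambda(S)$ is the maximum number of pairwise edge-disjoint $S$-trees, and $\lambda_3(G)=\min\{\lambda(S): |S|=3\}$. The lexicographic product $G\circ H$ has vertex set $V(G)\times V(H)$, and $(u,v)$ is adjacent to $(u',v')$ iff either $uu'\in E(G)$, or $u=u'$ and $vv'\in E(H)$. For $u\in V(G)$, the $H$-layer $H(u)$ is the vertex set $\{(u,v): v\in V(H)\}$. *)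

(* Defs.v *)
(* Simple graphs as symmetric irreflexive relations on a finType. *)
From mathcomp Require Import all_boot.
Set Implicit Arguments. Unset Strict Implicit. Unset Printing Implicit Defensive.

Section Graphs.
Variable T : finType.
Implicit Types (e : rel T) (S VT : {set T}) (F : {set {set T}}).

Definition simple_graph e := symmetric e /\ irreflexive e.

Definition connected_graph e := forall u v : T, connect e u v.

Definition is_edge e (f : {set T}) := exists u v, e u v /\ f = [set u; v].

Definition adjF F : rel T := fun u v => (u != v) && ([set u; v] \in F).

Definition subgraph e VT F :=
  forall f, f \in F -> is_edge e f /\ f \subset VT.

Definition has_cycle F :=
  exists (u : T) (q : seq T),
    2 <= size q /\ uniq (u :: q) /\ path (adjF F) u q /\ adjF F (last u q) u.

Definition is_tree VT F :=
  (forall u v, u \in VT -> v \in VT -> connect (adjF F) u v) /\ ~ has_cycle F.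

Definition S_tree e S VT F := subgraph e VT F /\ is_tree VT F /\ S \subset VT.

Definition has_disjoint_Strees e S k :=
  exists tr : 'I_k -> {set T} * {set {set T}},
    (forall i, S_tree e S (tr i).1 (tr i).2) /\
    (forall i j, i != j -> [disjoint (tr i).2 & (tr j).2]).

Definition lambdaS_is e S k :=
  has_disjoint_Strees e S k /\ (forall m, has_disjoint_Strees e S m -> m <= k).

Definition lambda3_is e l :=
  (forall S, #|S| = 3 -> exists k, lambdaS_is e S k /\ l <= k) /\
  (exists S, #|S| = 3 /\ lambdaS_is e S l).
End Graphs.

Definition lexprod (T1 T2 : finType) (e1 : rel T1) (e2 : rel T2) : rel (T1 * T2) :=
  fun a b => e1 a.1 b.1 || ((a.1 == b.1) && e2 a.2 b.2).

(* Main.v *)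
Require Import Defs.
From mathcomp Require Import all_boot.
From Stdlib Require Import Classical.
Set Implicit Arguments. Unset Strict Implicit. Unset Printing Implicit Defensive.

Lemma set2_eq (T : finType) (a b c d : T) :
  [set a; b] = [set c; d] -> (a = c /\ b = d) \/ (a = d /\ b = c).
Proof.
move=> H.
have ha : a \in [set c; d] by rewrite -H !inE eqxx.
have hb : b \in [set c; d] by rewrite -H !inE eqxx orbT.
have hc : c \in [set a; b] by rewrite H !inE eqxx.
have hd : d \in [set a; b] by rewrite H !inE eqxx orbT.
move: ha hb hc hd; rewrite !inE.
do 4! (case/orP=> /eqP ?); subst; auto.
Qed.

Lemma adjF_sym (T : finType) (F : {set {set T}}) : symmetric (adjF F).
Proof. by move=> u v; rewrite /adjF eq_sym setUC. Qed.

Lemma connect_symF (T : finType) (F : {set {set T}}) u v :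
  connect (adjF F) u v = connect (adjF F) v u.
Proof. exact: (sym_connect_sym (@adjF_sym T F)). Qed.

Lemma disjointI (T : finType) (A B : {set T}) :
  (forall E, E \in A -> E \in B -> False) -> [disjoint A & B].
Proof.
move=> H; rewrite -setI_eq0; apply/eqP/setP=> E; rewrite !inE.
by apply/negbTE/negP=> /andP[h1 h2]; exact: (H E).
Qed.

Lemma disjointE (T : finType) (A B : {set T}) E :
  [disjoint A & B] -> E \in A -> E \in B -> False.
Proof.
rewrite -setI_eq0 => /eqP/setP/(_ E); rewrite !inE => h h1 h2.
by rewrite h1 h2 in h.
Qed.

Lemma connect_rm (T : finType) (F : {set {set T}}) (u v : T) :
  connect (adjF (F :\ [set u; v])) u v ->
  forall p r, connect (adjF F) p r -> connect (adjF (F :\ [set u; v])) p r.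
Proof.
move=> Huv p r; apply: connect_sub => c d /andP[cd cdF].
case: (boolP ([set c; d] == [set u; v])) => [/eqP/set2_eq [[-> ->]|[-> ->]]|ne].
- exact: Huv.
- by rewrite connect_symF.
- by apply: connect1; rewrite /adjF cd !inE ne.
Qed.

Lemma path_rm (T : finType) (F : {set {set T}}) (u v : T) c p :
  path (adjF F) c p -> u \notin c :: p -> path (adjF (F :\ [set u; v])) c p.
Proof.
elim: p c => [|d p IH] c //= /andP[/andP[cd cdF] pp].
rewrite !inE !negb_or => /and3P[uc ud up].
rewrite IH ?inE ?negb_or ?ud //= andbT /adjF cd !inE cdF andbT.
apply/negP=> /eqP/set2_eq [[h _]|[_ h]]; subst.
- by rewrite eqxx in uc.
- by rewrite eqxx in ud.
Qed.

Lemma first_step (T : finType) (r : rel T) a b :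
  connect r a b -> a != b -> exists c, r a c.
Proof.
move=> /connectP [[|c p]] /= hp hl; first by rewrite hl eqxx.
by move=> _; exists c; case/andP: hp.
Qed.

Section Prune.
Variables (T : finType) (e : rel T) (S : {set T}) (s0 : T).

Lemma prune : forall F : {set {set T}},
  (forall f, f \in F -> is_edge e f) -> s0 \in S ->
  (forall s, s \in S -> connect (adjF F) s0 s) ->
  exists (VT : {set T}) (F' : {set {set T}}), F' \subset F /\ S_tree e S VT F'.
Proof.
move=> F; have [n Hn] : exists n, #|F| <= n by exists #|F|.
elim: n F Hn => [|n IH] F Hn HE Hs0 Hc.
  have F0 : F = set0 by apply/eqP; rewrite -cards_eq0 -leqn0.
  exists [set s0]; exists F; split=> //; split; last split.
  - by move=> f; rewrite F0 inE.
  - split.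
      move=> u v; rewrite !inE => /eqP -> /eqP ->; exact: connect0.
    case=> [u [q [hq [_ [hp _]]]]]; move: hq hp; case: q => //= a q _.
    by rewrite /adjF F0 inE andbF.
  - apply/subsetP=> s hs; rewrite inE; apply/eqP.
    have := Hc s hs; case/connectP=> [[|a p]] //= hp hl.
    by move: hp; rewrite /adjF F0 inE andbF.
case: (classic (has_cycle F)) => [[u [q [hq [hu [hp hl]]]]]|hnc].
- case: q hq hu hp hl => [|q0 q] //= hq hu /andP[uq0 hp] hl.
  set F1 := F :\ [set u; q0].
  have uF : [set u; q0] \in F by case/andP: uq0.
  have hF1 : #|F1| <= n.
    by rewrite -ltnS (leq_trans _ Hn) // /F1 (cardsD1 [set u; q0] F) uF.
  move: hu => /andP[unq /andP[q0q _]].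
  have uq : u != q0 by move: unq; rewrite inE negb_or => /andP[].
  have c1 : connect (adjF F1) q0 (last q0 q).
    apply/connectP; exists q => //; by apply: path_rm.
  have c2 : adjF F1 (last q0 q) u.
    case/andP: hl => lu luF; rewrite /adjF lu /F1 !inE luF andbT.
    apply/negP=> /eqP/set2_eq [[h1 h2]|[h1 _]].
      by move: lu; rewrite h1 eqxx.
    case: q hq q0q h1 {c1 lu luF hp unq} => [|a q] //= _.
    move=> hq0 hl0; move: hq0; rewrite -hl0.
    by rewrite (mem_last a q).
  have cu : connect (adjF F1) u q0.
    rewrite connect_symF; apply: connect_trans c1 (connect1 c2).
  have [VT [F' [sub tr]]] := IH F1 hF1
    (fun f hf => HE f (subsetP (subD1set F _) f hf)) Hs0
    (fun s hs => connect_rm cu (Hc s hs)).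
  exists VT, F'; split=> //; apply: subset_trans sub _; exact: subD1set.
- set VT := [set v | connect (adjF F) s0 v].
  case: (boolP [forall f in F, f \subset VT]) => [/forall_inP hall|].
    exists VT, F; split=> //; split; last split.
    + by move=> f hf; split; [exact: HE | exact: hall].
    + split=> // a b; rewrite !inE => ha hb.
      by apply: connect_trans hb; rewrite connect_symF.
    + by apply/subsetP=> s hs; rewrite inE Hc.
  move=> /forall_inPn [f0 f0F f0n].
  set F2 := [set f in F | f \subset VT].
  have hF2 : #|F2| <= n.
    rewrite -ltnS (leq_trans _ Hn) // proper_card //; apply/properP; split.
      by apply/subsetP=> f; rewrite inE => /andP[].
    by exists f0 => //; rewrite inE (negbTE f0n) andbF.
  have hc2 : forall v, connect (adjF F) s0 v -> connect (adjF F2) s0 v.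
    have gen : forall c p, connect (adjF F) s0 c -> connect (adjF F2) s0 c ->
        path (adjF F) c p -> connect (adjF F2) s0 (last c p).
      move=> c p; elim: p c => [|d p IHp] c //= h1 h2 /andP[cd hp].
      have h1' : connect (adjF F) s0 d := connect_trans h1 (connect1 cd).
      apply: IHp hp => //; apply: connect_trans h2 (connect1 _).
      case/andP: cd => cd cdF; rewrite /adjF cd inE cdF /=.
      apply/subsetP=> w; rewrite !inE => /orP[]/eqP->; [exact: h1 | exact: h1'].
    move=> v /connectP [p hp ->]; apply: gen hp; exact: connect0.
  have sF2 : F2 \subset F by apply/subsetP=> f; rewrite inE => /andP[].
  have [VT' [F' [sub tr]]] := IH F2 hF2
    (fun f hf => HE f (subsetP sF2 f hf)) Hs0
    (fun s hs => hc2 s (Hc s hs)).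
  exists VT', F'; split=> //; exact: subset_trans sub sF2.
Qed.
End Prune.

Lemma family_trees (T I : finType) (e : rel T) (S : {set T}) (s0 : T)
  (E : I -> {set {set T}}) :
  s0 \in S -> (forall i f, f \in E i -> is_edge e f) ->
  (forall i s, s \in S -> connect (adjF (E i)) s0 s) ->
  (forall i j, i != j -> [disjoint E i & E j]) -> has_disjoint_Strees e S #|I|.
Proof.
move=> Hs0 HE Hc Hd.
have : forall i, exists p : {set T} * {set {set T}}, p.2 \subset E i /\ S_tree e S p.1 p.2.
  move=> i; have [VT [F' [h1 h2]]] := prune (HE i) Hs0 (Hc i).
  by exists (VT, F').
case/fin_all_exists=> tr0 htr.
exists (fun k : 'I_#|I| => tr0 (enum_val k)); split.
  by move=> k; case: (htr (enum_val k)).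
move=> k k' kk'; apply: disjointI => f h1 h2.
have ne : enum_val k != enum_val k' by apply: contra kk' => /eqP/enum_val_inj ->.
case: (htr (enum_val k)) => s1 _; case: (htr (enum_val k')) => s2 _.
exact: (disjointE (Hd _ _ ne) (subsetP s1 f h1) (subsetP s2 f h2)).
Qed.

Lemma connect_map (A B : finType) (r : rel A) (s : rel B) (f : A -> B) :
  (forall a b, r a b -> connect s (f a) (f b)) ->
  forall a b, connect r a b -> connect s (f a) (f b).
Proof.
move=> H a b /connectP [p hp ->]; elim: p a hp => [|c p IH] a /=.
  by move=> _; exact: connect0.
by case/andP=> h1 h2; apply: connect_trans (H _ _ h1) (IH _ h2).
Qed.

Lemma edge_rel (T : finType) (e : rel T) a b :
  symmetric e -> is_edge e [set a; b] -> e a b.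
Proof.
move=> sym [a' [b' [h /set2_eq [[-> ->]|[-> ->]]]]] //; by rewrite sym.
Qed.

Section Main.
Variables (T1 T2 : finType) (e1 : rel T1) (e2 : rel T2) (l1 l2 : nat).
Variables (u u' : T1) (v1 v2 w t : T2).
Variables (F : 'I_l1 -> {set {set T1}}) (bb cc : 'I_l1 -> T1).
Variables (R : 'I_l2 -> {set {set T2}}) (hh : 'I_l2 -> T2).
Hypotheses (sym1 : symmetric e1) (irr1 : irreflexive e1).
Hypotheses (sym2 : symmetric e2) (irr2 : irreflexive e2).
Hypothesis conn1 : connected_graph e1.
Hypothesis HFe : forall i f, f \in F i -> is_edge e1 f.
Hypothesis HFd : forall i i', i != i' -> [disjoint F i & F i'].
Hypothesis HFc : forall i, connect (adjF (F i)) u u'.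
Hypothesis Hb : forall i, adjF (F i) u (bb i).
Hypothesis Hc : forall i, adjF (F i) u' (cc i).
Hypothesis Hbc : forall i, ~ (bb i = u' /\ cc i = u).
Hypothesis uu' : u != u'.
Hypothesis HRe : forall j f, f \in R j -> is_edge e2 f.
Hypothesis HRd : forall j j', j != j' -> [disjoint R j & R j'].
Hypothesis HRc : forall j s, s \in [set v1; v2; t] -> connect (adjF (R j)) t s.
Hypothesis Hh : forall j, adjF (R j) t (hh j).
Hypothesis v12 : v1 != v2.
Hypothesis tv1 : t != v1.
Hypothesis tv2 : t != v2.
Hypothesis Hw : w \in [set v1; v2; t].

Definition px := (u, v1).
Definition py := (u, v2).
Definition pz := (u', w).

Definition Zact := [exists i, cc i == u].
Definition sw j b := (b == u') && Zact && (hh j == w).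
Definition tside j a b :=
  if a == u then ~~ sw j b else if b == u then sw j a
  else if a == u' then t != w else if b == u' then t == w
  else enum_rank a < enum_rank b.

Definition EG i q : {set {set T1 * T2}} :=
  [set E | [|| [exists ab : T1 * T1, (ab.1 != ab.2) && ([set ab.1; ab.2] \in F i)
                  && (E == [set (ab.1, q); (ab.2, q)])],
              E == [set px; (bb i, q)], E == [set py; (bb i, q)] |
              E == [set pz; (cc i, q)]]].

Definition EH j : {set {set T1 * T2}} :=
  [set E | [exists a, exists pq : T2 * T2, (pq.1 != pq.2) && ([set pq.1; pq.2] \in R j)
                  && (E == [set (a, pq.1); (a, pq.2)])]
        || [exists ab : T1 * T1, e1 ab.1 ab.2 && tside j ab.1 ab.2
                  && (E == [set (ab.1, t); (ab.2, hh j)])]].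

Lemma tside_total j a b : a != b -> tside j a b || tside j b a.
Proof.
move=> ab; rewrite /tside.
case: (eqVneq a u) => [eau|au].
  have -> : (b == u) = false by apply/negbTE; rewrite -eau eq_sym.
  by rewrite orNb.
case: (eqVneq b u) => [_|bu]; first by rewrite orbN.
case: (eqVneq a u') => [eau'|au'].
  have -> : (b == u') = false by apply/negbTE; rewrite -eau' eq_sym.
  by rewrite orNb.
case: (eqVneq b u') => [_|bu']; first by rewrite orbN.
case: ltngtP => //= h.
by move: ab; rewrite -(inj_eq enum_rank_inj) => /eqP[]; move/val_inj: h.
Qed.

Lemma EG_conn i q s : s \in [set px; py; pz] -> connect (adjF (EG i q)) px s.
Proof.
have lift : forall a b, adjF (F i) a b -> adjF (EG i q) (a, q) (b, q).
  move=> a b /andP[ab abF]; rewrite /adjF inE.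
  apply/andP; split; first by apply: contra ab => /eqP[->].
  by apply/orP; left; apply/existsP; exists (a, b); rewrite /= ab abF eqxx.
have cl : connect (adjF (EG i q)) (u, q) (u', q).
  exact: (connect_map (f := fun a => (a, q)) (fun a b h => connect1 (lift a b h)) (HFc i)).
have hb := Hb i; have hc := Hc i.
have bq : connect (adjF (EG i q)) (bb i, q) (u, q).
  by rewrite connect_symF; apply: connect1; apply: lift.
have cq : connect (adjF (EG i q)) (u', q) (cc i, q).
  by apply: connect1; apply: lift.
have ub : u != bb i by case/andP: hb.
have xb : connect (adjF (EG i q)) px (bb i, q).
  apply: connect1; rewrite /adjF inE eqxx /= orbT andbT.
  by apply: contra ub => /eqP[->].
have yb : connect (adjF (EG i q)) py (bb i, q).
  apply: connect1; rewrite /adjF inE eqxx /= !orbT andbT.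
  by apply: contra ub => /eqP[->].
have zc : connect (adjF (EG i q)) (cc i, q) pz.
  rewrite connect_symF; apply: connect1; rewrite /adjF inE eqxx /= !orbT andbT.
  by case/andP: hc => h _; apply: contra h => /eqP[->].
have xu := connect_trans xb bq.
rewrite !inE => /orP[/orP[]|]/eqP->; first exact: connect0.
- apply: connect_trans xu _; rewrite connect_symF; exact: connect_trans yb bq.
- exact: connect_trans (connect_trans xu cl) (connect_trans cq zc).
Qed.
Lemma EH_conn j s : s \in [set px; py; pz] -> connect (adjF (EH j)) px s.
Proof.
have lift : forall a p r, adjF (R j) p r -> adjF (EH j) (a, p) (a, r).
  move=> a p r /andP[pr prR]; rewrite /adjF inE.
  apply/andP; split; first by apply: contra pr => /eqP[->].
  apply/orP; left; apply/existsP; exists a; apply/existsP; exists (p, r).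
  by rewrite /= pr prR eqxx.
have inR : forall a s, s \in [set v1; v2; t] -> connect (adjF (EH j)) (a, t) (a, s).
  move=> a s' hs'.
  exact: (connect_map (f := fun p => (a, p)) (fun p r h => connect1 (lift a p r h)) (HRc j hs')).
have ht : forall a, connect (adjF (EH j)) (a, hh j) (a, t).
  by move=> a; rewrite connect_symF; apply: connect1; apply: lift.
have step : forall a b, e1 a b -> connect (adjF (EH j)) (a, t) (b, t).
  move=> a b ab.
  have nab : a != b by apply: contraTneq ab => ->; rewrite irr1.
  have nab' : (a, t) != (b, hh j) by apply: contra nab => /eqP[->].
  have nba' : (b, t) != (a, hh j) by rewrite eq_sym in nab; apply: contra nab => /eqP[->].
  case/orP: (tside_total j nab) => hs.
    apply: connect_trans (ht b); apply: connect1; rewrite /adjF nab' inE /=.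
    by apply/orP; right; apply/existsP; exists (a, b); rewrite /= ab hs eqxx.
  rewrite connect_symF; apply: connect_trans (ht a); apply: connect1.
  rewrite /adjF nba' inE /=.
  by apply/orP; right; apply/existsP; exists (b, a); rewrite /= sym1 ab hs eqxx.
have cl : connect (adjF (EH j)) (u, t) (u', t).
  exact: (connect_map (f := fun a => (a, t)) step (conn1 u u')).
have xt : connect (adjF (EH j)) px (u, t).
  by rewrite connect_symF; apply: inR; rewrite !inE eqxx.
rewrite !inE => /orP[/orP[]|]/eqP->; first exact: connect0.
- by apply: connect_trans xt _; apply: inR; rewrite !inE eqxx orbT.
- by apply: connect_trans (connect_trans xt cl) _; apply: inR.
Qed.
Lemma EG_cases i q E : E \in EG i q ->
  (exists a b, a <> b /\ [set a; b] \in F i /\ E = [set (a, q); (b, q)]) \/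
  E = [set px; (bb i, q)] \/ E = [set py; (bb i, q)] \/ E = [set pz; (cc i, q)].
Proof.
rewrite inE => /or4P[/existsP[[a b] /= /andP[/andP[ab abF] /eqP->]]|/eqP->|/eqP->|/eqP->];
  [left; exists a, b; split=> //; exact/eqP | by right; left | by right; right; left
  | by right; right; right].
Qed.

Lemma EH_cases j E : E \in EH j ->
  (exists a p r, p <> r /\ [set p; r] \in R j /\ E = [set (a, p); (a, r)]) \/
  (exists a b, e1 a b /\ tside j a b /\ E = [set (a, t); (b, hh j)]).
Proof.
rewrite inE => /orP[/existsP[a /existsP[[p r] /= /andP[/andP[pr prR] /eqP->]]]|
                    /existsP[[a b] /= /andP[/andP[ab hs] /eqP->]]].
  by left; exists a, p, r; split=> //; exact/eqP.
by right; exists a, b.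
Qed.

Lemma EG_edge i q E : E \in EG i q -> is_edge (lexprod e1 e2) E.
Proof.
have hb := Hb i; have hc := Hc i.
case/EG_cases=> [[a [b [ab [abF ->]]]]|[->|[->|->]]].
- by exists (a, q), (b, q); split=> //; rewrite /lexprod /= (edge_rel sym1 (HFe abF)).
- exists px, (bb i, q); split=> //; rewrite /lexprod /=.
  by case/andP: hb => _ /HFe/(edge_rel sym1) ->.
- exists py, (bb i, q); split=> //; rewrite /lexprod /=.
  by case/andP: hb => _ /HFe/(edge_rel sym1) ->.
- exists pz, (cc i, q); split=> //; rewrite /lexprod /=.
  by case/andP: hc => _ /HFe/(edge_rel sym1) ->.
Qed.

Lemma EH_edge j E : E \in EH j -> is_edge (lexprod e1 e2) E.
Proof.
case/EH_cases=> [[a [p [r [pr [prR ->]]]]]|[a [b [ab [hs ->]]]]].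
- exists (a, p), (a, r); split=> //; rewrite /lexprod /= eqxx /=.
  by rewrite (edge_rel sym2 (HRe prR)) orbT.
- by exists (a, t), (b, hh j); split=> //; rewrite /lexprod /= ab.
Qed.

Lemma EG_same i q q' E : E \in EG i q -> E \in EG i q' -> q = q'.
Proof.
have ub : u <> bb i by case/andP: (Hb i) => /eqP.
have uc : u' <> cc i by case/andP: (Hc i) => /eqP.
have uuP : u <> u' by apply/eqP.
have v12P : v1 <> v2 by apply/eqP.
have hbc := @Hbc i.
case/EG_cases=> [[a [b [ab [abF ->]]]]|[->|[->|->]]];
case/EG_cases=> [[a' [b' [ab' [abF' E2]]]]|[E2|[E2|E2]]];
move/set2_eq: E2; rewrite /px /py /pz => [[[h1 h2]|[h1 h2]]]; try congruence; exfalso; apply: hbc; split; congruence.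
Qed.
Lemma EG_shape i q E : E \in EG i q ->
  exists a b al be, a <> b /\ [set a; b] \in F i /\ E = [set (a, al); (b, be)].
Proof.
case/EG_cases=> [[a [b [ab [abF ->]]]]|[->|[->|->]]].
- by exists a, b, q, q.
- case/andP: (Hb i) => /eqP ? ?; by exists u, (bb i), v1, q.
- case/andP: (Hb i) => /eqP ? ?; by exists u, (bb i), v2, q.
- case/andP: (Hc i) => /eqP ? ?; by exists u', (cc i), w, q.
Qed.

Lemma noXZ i i' : bb i = u' -> cc i' = u -> False.
Proof.
move=> h1 h2; case: (eqVneq i i') => [e|ne].
  by subst i'; apply: (@Hbc i).
have f1 : [set u; u'] \in F i by case/andP: (Hb i); rewrite h1.
have f2 : [set u; u'] \in F i' by case/andP: (Hc i'); rewrite h2 setUC.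
exact: (disjointE (HFd ne) f1 f2).
Qed.

Lemma EG_disj i q i' q' : (i, q) != (i', q') -> [disjoint EG i q & EG i' q'].
Proof.
move=> ne; apply: disjointI => E h1 h2.
case: (eqVneq i i') => [e|nei].
  subst i'; move: ne; rewrite (EG_same h1 h2) eqxx; done.
case: (EG_shape h1) => [a [b [al [be [ab [abF E1]]]]]].
case: (EG_shape h2) => [a' [b' [al' [be' [ab' [abF' E2]]]]]].
move: E2; rewrite E1 => /set2_eq [[h3 h4]|[h3 h4]]; injection h3; injection h4; intros; subst.
- exact: (disjointE (HFd nei) abF abF').
- by rewrite setUC in abF'; exact: (disjointE (HFd nei) abF abF').
Qed.

Lemma EH_disj j j' : j != j' -> [disjoint EH j & EH j'].
Proof.
move=> ne; apply: disjointI => E h1 h2.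
case: (EH_cases h1) => [[a [p [r [pr [prR E1]]]]]|[a [b [ab [hs E1]]]]];
case: (EH_cases h2) => [[a' [p' [r' [pr' [prR' E2]]]]]|[a' [b' [ab' [hs' E2]]]]];
move: E2; rewrite E1 => /set2_eq [[h3 h4]|[h3 h4]]; injection h3; injection h4; intros; subst.
- exact: (disjointE (HRd ne) prR prR').
- by rewrite setUC in prR'; exact: (disjointE (HRd ne) prR prR').
- by rewrite irr1 in ab'.
- by rewrite irr1 in ab'.
- by rewrite irr1 in ab.
- by rewrite irr1 in ab.
- case/andP: (Hh j) => _ h; case/andP: (Hh j') => _ h'.
  match goal with H : hh j = hh j' |- _ => rewrite H in h | H : hh j' = hh j |- _ => rewrite -H in h end.
  exact: (disjointE (HRd ne) h h').
- by case/andP: (Hh j') => /eqP.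
Qed.
Lemma tside_T1 j a : a != u -> tside j a u -> sw j a.
Proof. by move=> au; rewrite /tside (negbTE au) eqxx. Qed.

Lemma tside_T2 j b : b != u' -> tside j u' b -> t = w -> False.
Proof.
move=> bu; rewrite /tside eq_sym (negbTE uu') eqxx.
case: (eqVneq b u) => [_|_].
  rewrite /sw eqxx /= => /andP[_ /eqP hw] tw.
  by case/andP: (Hh j) => /eqP; rewrite hw tw.
by move=> /eqP.
Qed.

Lemma tside_T3 j a : (a = u -> Zact) -> a != u' -> tside j a u' -> hh j = w -> False.
Proof.
move=> Z au hs hw; move: hs; rewrite /tside.
case: (eqVneq a u) => [ea|_].
  by rewrite /sw eqxx (Z ea) hw eqxx.
rewrite eq_sym (negbTE uu') (negbTE au) eqxx => /eqP tw.
by case/andP: (Hh j) => /eqP; rewrite hw tw.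
Qed.

Lemma EGH_disj i q j : [disjoint EG i q & EH j].
Proof.
apply: disjointI => E h1 h2.
case: (EH_cases h2) => [[a [p [r [pr [prR E2]]]]]|[a [b [ab [hs E2]]]]].
  case: (EG_shape h1) => [a' [b' [al [be [ab' [abF E1]]]]]].
  by move: E2; rewrite E1 => /set2_eq [[h3 h4]|[h3 h4]]; injection h3; injection h4; intros; subst.
have nab : a != b by apply: contraTneq ab => ->; rewrite irr1.
have th : t <> hh j by case/andP: (Hh j) => /eqP.
have hbu : bb i != u by case/andP: (Hb i); rewrite eq_sym.
have hcu : cc i != u' by case/andP: (Hc i); rewrite eq_sym.
case/EG_cases: h1 => [[a' [b' [ab' [abF E1]]]]|[E1|[E1|E1]]].
  move: E2; rewrite E1 => /set2_eq [[h3 h4]|[h3 h4]]; injection h3; injection h4; intros; subst; congruence.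
- move: E2; rewrite E1 /px => /set2_eq [[h3 h4]|[h3 h4]].
  + by move/eqP: tv1; congruence.
  + have eb : b = u by congruence.
    have ea : a = bb i by congruence.
    rewrite ea eb in hs.
    move: (tside_T1 hbu hs); rewrite /sw => /andP[/andP[/eqP e /existsP[i' /eqP c]] _].
    exact: (noXZ e c).
- move: E2; rewrite E1 /py => /set2_eq [[h3 h4]|[h3 h4]].
  + by move/eqP: tv2; congruence.
  + have eb : b = u by congruence.
    have ea : a = bb i by congruence.
    rewrite ea eb in hs.
    move: (tside_T1 hbu hs); rewrite /sw => /andP[/andP[/eqP e /existsP[i' /eqP c]] _].
    exact: (noXZ e c).
- move: E2; rewrite E1 /pz => /set2_eq [[h3 h4]|[h3 h4]].
  + have ea : a = u' by congruence.
    have eb : b = cc i by congruence.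
    have tw : t = w by congruence.
    rewrite ea eb in hs.
    exact: (tside_T2 hcu hs tw).
  + have Z : a = u -> Zact.
      by move=> ea; apply/existsP; exists i; apply/eqP; congruence.
    have eb : b = u' by congruence.
    have hw : hh j = w by congruence.
    rewrite eb in hs; rewrite eb in nab.
    exact: (tside_T3 Z nab hs hw).
Qed.
Definition EE (k : ('I_l2 + 'I_l1 * T2)%type) :=
  match k with inl j => EH j | inr p => EG p.1 p.2 end.

Lemma main_sec : has_disjoint_Strees (lexprod e1 e2) [set px; py; pz] (l2 + l1 * #|T2|).
Proof.
have := @family_trees _ _ (lexprod e1 e2) [set px; py; pz] px EE.
rewrite card_sum card_prod !card_ord; apply.
- by rewrite !inE eqxx.
- by case=> [j|[i q]] f /=; [exact: EH_edge | exact: EG_edge].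
- by case=> [j|[i q]] s /=; [exact: EH_conn | exact: EG_conn].
- case=> [j|[i q]] [j'|[i' q']] //= ne.
  + exact: EH_disj.
  + by rewrite disjoint_sym; exact: EGH_disj.
  + exact: EGH_disj.
  + exact: EG_disj.
Qed.
End Main.

Lemma card3 (T : finType) (a b c : T) : a != b -> a != c -> b != c -> #|[set a; b; c]| = 3.
Proof.
move=> ab ac bc; rewrite -setUA cardsU1 cards2 bc !inE negb_or ab ac.
done.
Qed.

Lemma exists_notin (T : finType) (A : {set T}) : #|A| < #|T| -> exists a, a \notin A.
Proof.
move=> h; apply: NNPP => hn.
have : [set: T] \subset A.
  by apply/subsetP=> a _; apply: NNPP => ha; apply: hn; exists a; apply/negP.
move/subset_leq_card; rewrite cardsT => h'.
by move: (leq_trans h h'); rewrite ltnn.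
Qed.

Lemma nb_choice (T : finType) (r : rel T) a b c : symmetric r ->
  connect r a b -> connect r a c -> a != b -> c != a -> c != b ->
  exists p q, r a p /\ r b q /\ ~ (p = b /\ q = a).
Proof.
move=> sym hab hac ab ca cb.
have [p0 hp0] := first_step hab ab.
have hba : connect r b a by rewrite (sym_connect_sym sym).
have ba : b != a by rewrite eq_sym.
have [q0 hq0] := first_step hba ba.
case: (classic (exists p, r a p /\ p <> b)) => [[p [hp pb]]|np].
  by exists p, q0; split=> //; split=> // [[]].
case: (classic (exists q, r b q /\ q <> a)) => [[q [hq qa]]|nq].
  by exists p0, q; split=> //; split=> // [[]].
exfalso.
have cl : forall d p, d \in [set a; b] -> path r d p -> last d p \in [set a; b].
  move=> d p; elim: p d => [|d' p IH] d //= hd /andP[hdd hp]; apply: IH hp.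
  move: hd; rewrite !inE => /orP[]/eqP ed; subst d.
    by apply/orP; right; apply/eqP; apply: NNPP => h; apply: np; exists d'.
  by apply/orP; left; apply/eqP; apply: NNPP => h; apply: nq; exists d'.
case/connectP: hac => p hp ec.
have := cl a p; rewrite -ec !inE eqxx => /(_ isT hp) /orP[]/eqP h.
  by move: ca; rewrite h eqxx.
by move: cb; rewrite h eqxx.
Qed.

Lemma extract (T : finType) (e : rel T) (S : {set T}) l : lambda3_is e l -> #|S| = 3 ->
  exists F : 'I_l -> {set {set T}}, (forall i f, f \in F i -> is_edge e f) /\
   (forall i i', i != i' -> [disjoint F i & F i']) /\
   (forall i a b, a \in S -> b \in S -> connect (adjF (F i)) a b).
Proof.
case=> [H _] hS; case: (H S hS) => k [[[tr [htr hd]] _] le].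
exists (fun i => (tr (widen_ord le i)).2); split; last split.
- by move=> i f hf; case: (htr (widen_ord le i)) => [hs _]; case: (hs f hf).
- move=> i i' ne; apply: hd; apply: contra ne => /eqP h.
  by apply/eqP/val_inj; move: (congr1 val h).
- move=> i a b ha hb; case: (htr (widen_ord le i)) => [_ [[hc _] sub]].
  by apply: hc; apply: (subsetP sub).
Qed.

Unset Implicit Arguments.
Theorem lemma3p2 (T1 T2 : finType) (e1 : rel T1) (e2 : rel T2) (l1 l2 : nat)
  (x y z : T1 * T2) :
  simple_graph e1 -> simple_graph e2 ->
  connected_graph e1 -> connected_graph e2 ->
  3 <= #|T1| -> 3 <= #|T2| ->
  lambda3_is e1 l1 -> lambda3_is e2 l2 ->
  x != y -> x.1 = y.1 -> z.1 != x.1 ->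
  has_disjoint_Strees (lexprod e1 e2) [set x; y; z] (l2 + l1 * #|T2|).
Proof.
move=> [sym1 irr1] [sym2 irr2] c1 c2 h1 h2 L1 L2.
case: x => u v1; case: y => u0 v2; case: z => u' w /= xy e zx; subst u0.
have v12 : v1 != v2 by apply: contra xy => /eqP ->.
have uu' : u != u' by rewrite eq_sym.
have [u'' hu''] : exists a, a \notin [set u; u'].
  by apply: exists_notin; apply: leq_ltn_trans h1; rewrite cards2; case: (_ != _).
move: hu''; rewrite !inE negb_or => /andP[uu1 uu2].
have ua : u != u'' by rewrite eq_sym.
have ua' : u' != u'' by rewrite eq_sym.
have [F [HFe [HFd HFc]]] := extract L1 (card3 uu' ua ua').
have hu : u \in [set u; u'; u''] by rewrite !inE eqxx.
have hu' : u' \in [set u; u'; u''] by rewrite !inE eqxx ?orbT.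
have hu'' : u'' \in [set u; u'; u''] by rewrite !inE eqxx ?orbT.
have hbc : forall i, exists bc : T1 * T1,
    adjF (F i) u bc.1 /\ adjF (F i) u' bc.2 /\ ~ (bc.1 = u' /\ bc.2 = u).
  move=> i.
  have [p [q [hp [hq hn]]]] := nb_choice (@adjF_sym _ (F i))
    (HFc i u u' hu hu') (HFc i u u'' hu hu'')
    uu' uu1 uu2.
  by exists (p, q).
case/fin_all_exists: hbc => bc hbc.
have [t0 ht0] : exists a, a \notin [set v1; v2].
  by apply: exists_notin; apply: leq_ltn_trans h2; rewrite cards2; case: (_ != _).
move: ht0; rewrite !inE negb_or => /andP[t01 t02].
set t := if (w != v1) && (w != v2) then w else t0.
have tv1 : t != v1 by rewrite /t; case: ifP => // /andP[].
have tv2 : t != v2 by rewrite /t; case: ifP => // /andP[].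
have Hw : w \in [set v1; v2; t].
  rewrite !inE /t; case: ifP => [_|]; first by rewrite eqxx orbT.
  by move/negbT; rewrite negb_and !negbK => /orP[] ->; rewrite ?orbT.
have v1t : v1 != t by rewrite eq_sym.
have v2t : v2 != t by rewrite eq_sym.
have [R [HRe [HRd HRc]]] := extract L2 (card3 v12 v1t v2t).
have tS : t \in [set v1; v2; t] by rewrite !inE eqxx orbT.
have hh : forall j, exists h, adjF (R j) t h.
  move=> j; apply: (first_step (b := v1)); last exact: tv1.
  by apply: HRc => //; rewrite !inE eqxx.
case/fin_all_exists: hh => hh Hh.
apply: (@main_sec T1 T2 e1 e2 l1 l2 u u' v1 v2 w t F (fun i => (bc i).1) (fun i => (bc i).2) R hh)
  => //.
all: try (by move=> i; apply: HFc).
all: try (by move=> i; case: (hbc i)).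
all: try (by move=> i; case: (hbc i) => _ []).
all: try (by move=> j s hs; apply: HRc).
all: try (by move=> i; case: (hbc i) => _ [] _ ).
Qed.
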